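(* Let \(k\le s\le t\) be non-negative integers, and let \(J=(j_0<\dots<j_{s-1})\) and \(K=(k_0<\dots<k_{t-1})\) be strictly increasing sequences of non-negative integers such that \(k_{t-s+p}\ge j_p\) for \(p=0,\dots,s-1\). Then \(N_k(K)\ge N_k(J)\), and the inequality is strict if \(K\ne J\).
   Context: For a strictly increasing sequence \(J=(j_0<\dots<j_{r-1})\) of non-negative integers of length \(r\ge k\), \(N_k(J)=r(r-k)+\sum_{q=0}^{r-1}(j_q-q)\). *)

(* Defs.v *)
From mathcomp Require Import all_boot all_order all_algebra.
Set Implicit Arguments. Unset Strict Implicit. Unset Printing Implicit Defensive.
Import GRing.Theory Num.Theory.
Local Open Scope ring_scope.

(* A strictly increasing sequence J = (j_0 < ... < j_{r-1}) of non-negative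
   integers is represented by s : seq nat with sorted ltn s; r = size s.
   N_k(J) = r(r-k) + sum_{q=0}^{r-1} (j_q - q), computed in int
   (no truncated subtraction). *)
Definition Nk (k : nat) (J : seq nat) : int :=
  let r := size J in
  (r%:Z * (r%:Z - k%:Z)) + \sum_(q < r) ((nth 0%N J q)%:Z - q%:Z).

(* Main.v *)
Require Import Defs.
From mathcomp Require Import all_boot all_order all_algebra.
From mathcomp Require Import zify ring.
Import GRing.Theory Num.Theory.
Local Open Scope ring_scope.

Lemma sorted_nth_ge (K : seq nat) : sorted ltn K ->
  forall q, (q < size K)%N -> (q <= nth 0 K q)%N.
Proof.
move=> sK; elim=> [|q IH] Hq //.
have H1 := IH (ltnW Hq).
have H2 : (nth 0 K q < nth 0 K q.+1)%N.
  by apply: (sorted_ltn_nth ltn_trans) => //; rewrite inE // ltnW.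
by apply: leq_ltn_trans H1 H2.
Qed.

Theorem lemma4p16 (k s t : nat) (J K : seq nat) :
  (k <= s)%N -> (s <= t)%N ->
  sorted ltn J -> size J = s ->
  sorted ltn K -> size K = t ->
  (forall p : nat, (p < s)%N -> (nth 0 J p <= nth 0 K (t - s + p))%N) ->
  Nk k J <= Nk k K /\ (K <> J -> Nk k J < Nk k K).
Proof.
move=> ks st sJ zJ sK zK H.
set a := nth 0%N K. set b := nth 0%N J.
set A := \sum_(q < t - s) ((a q)%:Z - q%:Z).
set B := \sum_(p < s) ((a (t - s + p)%N)%:Z - (b p)%:Z).
have E : Nk k K = Nk k J + ((t - s)%N%:Z * (t%:Z - k%:Z)) + A + B.
  rewrite /Nk zJ zK.
  rewrite -(big_mkord xpredT (fun q => (a q)%:Z - q%:Z)).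
  rewrite (@big_cat_nat _ _ _ (t - s)%N 0 t _ _ (leq0n _) (leq_subr s t)) /=.
  rewrite -{2}(add0n (t - s)%N) big_addn big_mkord.
  have -> : (t - (t - s) = s)%N by lia.
  rewrite /A /B big_mkord.
  have -> : \sum_(i < s) ((a (i + (t - s))%N)%:Z - (i + (t - s))%N%:Z)
     = \sum_(i < s) (((a (t - s + i)%N)%:Z - (b i)%:Z) + ((b i)%:Z - i%:Z)
          - (t - s)%N%:Z).
    by apply: eq_bigr => i _; rewrite addnC PoszD; ring.
  rewrite -/A big_split /= big_split /= sumr_const card_ord -mulr_natr natz.
  rewrite -/B.
  have -> : ((t - s)%N%:Z = t%:Z - s%:Z) by rewrite subzn.
  rewrite -/b. ring.
have A0 : 0 <= A.
  apply: sumr_ge0 => i _; rewrite subr_ge0 lez_nat; apply: sorted_nth_ge => //.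
  have := ltn_ord i; rewrite zK; lia.
have B0 : 0 <= B.
  by apply: sumr_ge0 => i _; rewrite subr_ge0 lez_nat; apply: H.
have C0 : 0 <= (t - s)%N%:Z * (t%:Z - k%:Z).
  by apply: mulr_ge0 => //; rewrite subr_ge0 lez_nat; lia.
split; first by rewrite E; lia.
move=> KJ.
case: (ltnP s t) => hst.
  have C1 : 0 < (t - s)%N%:Z * (t%:Z - k%:Z).
    by apply: mulr_gt0; rewrite ?subr_gt0 ltz_nat; lia.
  rewrite E; lia.
have ets : t = s by apply/eqP; rewrite eqn_leq st hst.
case: (boolP [exists p : 'I_s, a p != b p]) => [/existsP [p Hab] | /existsPn Hn]; last first.
  exfalso; apply: KJ; apply: (eq_from_nth (x0:=0%N)); first by rewrite zK zJ.
  move=> i; rewrite zK ets => Hi; have := Hn (Ordinal Hi); rewrite negbK => /eqP.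
  by [].
have Hp := H p (ltn_ord p).
rewrite ets subnn add0n -/a -/b in Hp.
have Hlt : (b p < a p)%N by rewrite ltn_neqAle eq_sym Hab Hp.
have B1 : 0 < B.
  rewrite /B (bigD1 p) //=.
  have R0 : 0 <= \sum_(i < s | i != p) ((a (t - s + i)%N)%:Z - (b i)%:Z).
    by apply: sumr_ge0 => i _; rewrite subr_ge0 lez_nat; apply: H.
  rewrite ets subnn add0n in R0 *.
  have : (b p)%:Z < (a p)%:Z by rewrite ltz_nat.
  move: R0; move: (\sum_(i < s | i != p) _) => S.
  lia.
rewrite E; lia.
Qed.
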